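(* Let $(X,\mathcal{M})$ and $(U,\mathcal{U})$ be analytic measurable spaces, and let $\mathcal{A}\subseteq\mathcal{M}$ be a $\sigma$-algebra on $X$ and $\mathcal{F},\mathcal{G}\subseteq\mathcal{U}$ be $\sigma$-algebras on $U$, such that $\mathcal{A}$ and $\mathcal{F}\cap\mathcal{G}$ are countably generated. Assume moreover that $(\mathcal{A}\otimes\mathcal{F})\cap(\mathcal{A}\otimes\mathcal{G})$ is countably generated and countably separated. Then $$(\mathcal{A}\otimes\mathcal{F})\cap(\mathcal{A}\otimes\mathcal{G})=\mathcal{A}\otimes(\mathcal{F}\cap\mathcal{G}).$$
   Context: A $\sigma$-algebra is countably generated if it is generated by an at most countable family of sets. A $\sigma$-algebra on a set $E$ is countably separated if it contains an at most countable family of sets $(M_n)$ separating the points of $E$ (for all $x\ne y$ there is $n$ with exactly one of $x,y$ in $M_n$). A measurable space $(X,\mathcal{M})$ is analytic if $X$ is isomorphic (via a bijective bimeasurable map) to an analytic subset of $[0,1]$ (a subset that is the continuous image of a Polish space) with its Borel $\sigma$-algebra, $\mathcal{M}$ is countably generated and $\mathcal{M}$ contains all singletons of $X$. $\otimes$ denotes the product $\sigma$-algebra generated by measurable rectangles. *)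

(* Defs.v *)
From HB Require Import structures.
From mathcomp Require Import all_boot all_order all_algebra.
From mathcomp Require Import all_classical all_reals all_analysis.
Set Implicit Arguments. Unset Strict Implicit. Unset Printing Implicit Defensive.
Import Order.TTheory GRing.Theory Num.Theory.
Import numFieldNormedType.Exports.
Local Open Scope classical_set_scope.
Local Open Scope ring_scope.

Definition is_sigma_algebra (T : Type) (F : set (set T)) : Prop :=
  sigma_algebra setT F.

Definition countably_generated (T : Type) (F : set (set T)) : Prop :=
  exists G : set (set T), countable G /\ F = <<s G >>.

Definition countably_separated (T : Type) (F : set (set T)) : Prop :=
  exists G : set (set T), [/\ countable G, G `<=` F &
    forall x y : T, x <> y -> exists2 M, G M & (M x /\ ~ M y) \/ (M y /\ ~ M x)].

Definition prod_sigma (X U : Type) (A : set (set X)) (F : set (set U))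
  : set (set (X * U)) :=
  <<s [set A1 `*` F1 | A1 in A & F1 in F] >>.

Definition polish (R : realType) (P : completePseudoMetricType R) : Prop :=
  hausdorff_space P /\ exists D : set P, countable D /\ closure D = setT.

Definition analytic_subset01 (R : realType) (S : set R) : Prop :=
  S `<=` `[0, 1] /\
  exists (P : completePseudoMetricType R) (f : P -> R),
    [/\ polish P, continuous f & range f = S].

(** (X, M) is analytic: isomorphic (via a bijective bimeasurable map) to an
    analytic subset S of [0,1] endowed with its Borel sigma-algebra (the trace
    of the Borel sets of R), M countably generated and containing singletons. *)
Definition analytic_space (R : realType) (X : Type) (M : set (set X)) : Prop :=
  [/\ (exists (S : set R) (f : X -> R),
         [/\ analytic_subset01 S, injective f, range f = S &
             forall A : set X, M A <-> exists2 B : set R, measurable B & A = f @^-1` B]),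
      countably_generated M &
      forall x : X, M [set x]].

(* Main.v *)
Require Import Defs.
From HB Require Import structures.
From mathcomp Require Import all_boot all_order all_algebra.
From mathcomp Require Import all_classical all_reals all_analysis.
From mathcomp Require Import ring lra.
Set Implicit Arguments. Unset Strict Implicit. Unset Printing Implicit Defensive.
Import Order.TTheory GRing.Theory Num.Theory.
Import numFieldNormedType.Exports.
Local Open Scope classical_set_scope.
Local Open Scope ring_scope.
From mathcomp Require Import measurable_realfun.

Section abs.
Context {R : realType} {T : Type}.
Implicit Types (b : T -> R -> T -> Prop).

Record ispm b : Prop := IsPM {
  pm_refl : forall x e, 0 < e -> b x e x;
  pm_sym : forall x y e, b x e y -> b y e x;
  pm_tri : forall x y z e1 e2, b x e1 y -> b y e2 z -> b x (e1 + e2) z }.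

Definition cauchyb b (s : nat -> T) := forall e, 0 < e ->
  exists N, forall n m, (N <= n)%N -> (N <= m)%N -> b (s n) e (s m).
Definition convb b (s : nat -> T) x := forall e, 0 < e ->
  exists N, forall n, (N <= n)%N -> b x e (s n).
Definition denseb b (c : nat -> T) := forall x e, 0 < e -> exists n, b x e (c n).
Record polishb b : Prop := PolishB {
  pol_pm : ispm b;
  pol_compl : forall s, cauchyb b s -> exists x, convb b s x;
  pol_sep : exists c, denseb b c }.
Definition bopen b (S : set T) := forall x, S x -> exists2 e, 0 < e & forall y, b x e y -> S y.
Definition clopen b S := bopen b S /\ bopen b (~` S).
Definition finer b b0 := forall x e, 0 < e -> exists2 e', 0 < e' & forall y, b x e' y -> b0 x e y.
Definition hausd b := forall x y, (forall e, 0 < e -> b x e y) -> x = y.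

Lemma pm_le b x y e1 e2 : ispm b -> b x e1 y -> e1 <= e2 -> b x e2 y.
Proof.
move=> pm h; rewrite le_eqVlt => /orP [/eqP <- //|lt].
have := pm_tri pm h (pm_refl pm y (_ : 0 < e2 - e1)).
rewrite subr_gt0 => /(_ lt); by rewrite addrC subrK.
Qed.

Lemma finer_refl b : finer b b.
Proof. by move=> x e e0; exists e. Qed.

Lemma finer_trans b1 b2 b3 : finer b1 b2 -> finer b2 b3 -> finer b1 b3.
Proof.
move=> h12 h23 x e e0; have [e' e'0 h'] := h23 x e e0.
have [e'' e''0 h''] := h12 x e' e'0; exists e'' => // y /h''; exact: h'.
Qed.

Lemma finer_conv b b0 s x : finer b b0 -> convb b s x -> convb b0 s x.
Proof.
move=> hf hc e e0; have [e' e'0 h] := hf x e e0.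
have [N hN] := hc e' e'0; exists N => n /hN; exact: h.
Qed.

Lemma finer_open b b0 S : finer b b0 -> bopen b0 S -> bopen b S.
Proof.
move=> hf ho x Sx; have [e e0 h] := ho x Sx.
have [e' e'0 h'] := hf x e e0; exists e' => // y /h'; exact: h.
Qed.

Lemma finer_clopen b b0 S : finer b b0 -> clopen b0 S -> clopen b S.
Proof. by move=> hf [h1 h2]; split; apply: finer_open hf _. Qed.

Lemma conv_unique b s x y : ispm b -> hausd b -> convb b s x -> convb b s y -> x = y.
Proof.
move=> pm hh hx hy; apply: hh => e e0.
have e20 : 0 < e / 2 by rewrite divr_gt0.
have [N1 h1] := hx _ e20; have [N2 h2] := hy _ e20.
have := pm_tri pm (h1 (maxn N1 N2) (leq_maxl _ _)) (pm_sym pm (h2 (maxn N1 N2) (leq_maxr _ _))).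
by rewrite -splitr.
Qed.

Lemma lim_not b S s x N : bopen b S -> convb b s x ->
  (forall n, (N <= n)%N -> ~ S (s n)) -> ~ S x.
Proof.
move=> ho hc hn Sx; have [e e0 h] := ho x Sx.
have [M hM] := hc e e0.
apply: (hn (maxn N M) (leq_maxl _ _)); apply: h; apply: hM; exact: leq_maxr.
Qed.

Lemma lim_in b S s x N : bopen b (~` S) -> convb b s x ->
  (forall n, (N <= n)%N -> S (s n)) -> S x.
Proof.
move=> ho hc hn; apply: contrapT => nS.
apply: (lim_not ho hc (N := N)) nS => n /hn; by move=> h /(_ h).
Qed.

End abs.

Section ref.
Context {R : realType} {T : Type}.
Implicit Types (b : T -> R -> T -> Prop).

Lemma arch_inv (r : R) : 0 < r -> exists m : nat, (m.+1%:R)^-1 < r.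
Proof.
move=> r0; exists (Num.bound (r^-1)).
rewrite invf_plt ?posrE ?ltr0n //.
apply: lt_trans (archi_boundP _) _; first by rewrite invr_ge0 ltW.
by rewrite ltr_nat.
Qed.

Definition refb b (i : T -> nat) (k : T -> R) : T -> R -> T -> Prop :=
  fun x e y => [/\ b x e y, i x = i y & `|k x - k y| < e].

Lemma refb_pm b i k : ispm b -> ispm (refb b i k).
Proof.
move=> pm; split.
- by move=> x e e0; split => //; [exact: pm_refl|rewrite subrr normr0].
- by move=> x y e [h1 h2 h3]; split => //; [exact: pm_sym|rewrite distrC].
- move=> x y z e1 e2 [h1 h2 h3] [g1 g2 g3]; split.
  + exact: pm_tri h1 g1.
  + by rewrite h2.
  + apply: le_lt_trans (ler_distD (k y) _ _) _; exact: ltrD.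
Qed.

Lemma refb_finer b i k : finer (refb b i k) b.
Proof. by move=> x e e0; exists e => // y []. Qed.

Lemma refb_open b i k (S : set T) :
  (forall x y, i x = i y -> S x -> S y) -> bopen (refb b i k) S.
Proof. move=> h x Sx; exists 1 => // y [_ hi _]; exact: (h x y hi Sx). Qed.

Definition cauchyR (u : nat -> R) := forall e, 0 < e ->
  exists N, forall n m, (N <= n)%N -> (N <= m)%N -> `|u n - u m| < e.

Lemma refb_polish b i k : polishb b ->
  (forall s x j N, convb b s x -> (forall n, (N <= n)%N -> i (s n) = j) ->
     cauchyR (k \o s) ->
     i x = j /\ (forall e, 0 < e -> exists N, forall n, (N <= n)%N -> `|k x - k (s n)| < e)) ->
  (forall x e, 0 < e -> exists2 d, 0 < d & forall y, b x d y -> i y = i x -> `|k x - k y| < e) ->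
  polishb (refb b i k).
Proof.
move=> [pm compl [c hc]] Hlim Hcont; split.
- exact: refb_pm.
- move=> s hs.
  have [x hx] : exists x, convb b s x.
    apply: compl => e e0; have [N hN] := hs e e0.
    by exists N => n m Nn Nm; have [] := hN n m Nn Nm.
  have [N0 hN0] := hs 1 ltr01.
  have hi : forall n, (N0 <= n)%N -> i (s n) = i (s N0).
    by move=> n Nn; have [_ -> _] := hN0 N0 n (leqnn _) Nn.
  have hk : cauchyR (k \o s).
    by move=> e e0; have [N hN] := hs e e0; exists N => n m Nn Nm; have [] := hN n m Nn Nm.
  have [ix kx] := Hlim s x (i (s N0)) N0 hx hi hk.
  exists x => e e0.
  have [N1 h1] := hx e e0; have [N2 h2] := kx e e0.
  exists (maxn N0 (maxn N1 N2)) => n; rewrite !geq_max => /and3P [a1 a2 a3].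
  split; [exact: h1| by rewrite ix hi| exact: h2].
- pose c' (n : nat) : T := match (unpickle n : option (nat * nat * nat)) with
    | Some (a, m, j) =>
       match pselect (exists y, b (c a) (m.+1%:R)^-1 y /\ i y = j) with
       | left h => projT1 (cid h)
       | right _ => c a end
    | None => c 0%N end.
  exists c' => x e e0.
  have [d d0 hd] := Hcont x e e0.
  have r0 : 0 < Num.min d e / 2 by rewrite divr_gt0 // lt_min d0 e0.
  have [m hm] := arch_inv r0.
  have m0 : 0 < (m.+1%:R)^-1 :> R by rewrite invr_gt0 ltr0Sn.
  have [a ha] := hc x _ m0.
  exists (pickle (a, m, i x)); rewrite /c' pickleK.
  case: pselect => [h|nh]; last first.
    by exfalso; apply: nh; exists x; split => //; exact: pm_sym.
  case: (cid h) => y /= [hy1 hy2].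
  have hxy : b x (Num.min d e) y.
    apply: pm_le pm (pm_tri pm ha hy1) _.
    rewrite [X in _ <= X]splitr; apply: lerD; exact: ltW.
  split.
  + apply: pm_le pm hxy _; by rewrite ge_min lexx orbT.
  + by [].
  + apply: hd => //; apply: pm_le pm hxy _; by rewrite ge_min lexx.
Qed.

End ref.

Section gen.
Context {R : realType} {T : Type}.
Implicit Types (b : T -> R -> T -> Prop).

Lemma inv_diff (B a a' : R) : 0 < B -> B^-1 <= a -> B^-1 <= a' ->
  `|a^-1 - a'^-1| <= B ^+ 2 * `|a - a'|.
Proof.
move=> B0 ha ha'.
have Bi0 : 0 < B^-1 by rewrite invr_gt0.
have a0 : 0 < a by apply: lt_le_trans ha.
have a'0 : 0 < a' by apply: lt_le_trans ha'.
have -> : a^-1 - a'^-1 = a^-1 * a'^-1 * (a' - a).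
  by field; apply/andP; split; rewrite gt_eqF.
have i1 : 0 <= a^-1 by rewrite invr_ge0 ltW.
have i2 : 0 <= a'^-1 by rewrite invr_ge0 ltW.
rewrite !normrM distrC expr2 (ger0_norm i1) (ger0_norm i2).
apply: ler_wpM2r; first exact: normr_ge0.
apply: ler_pM => //.
- by rewrite invf_ple ?posrE.
- by rewrite invf_ple ?posrE.
Qed.

Definition contb b (phi : T -> R) := forall x e, 0 < e ->
  exists2 d, 0 < d & forall y, b x d y -> `|phi x - phi y| < e.

Lemma le_lim b phi s x N t : contb b phi -> convb b s x ->
  (forall n, (N <= n)%N -> phi (s n) <= t) -> phi x <= t.
Proof.
move=> hc hx hn; rewrite leNgt; apply/negP => lt.
have h0 : 0 < phi x - t by rewrite subr_gt0.
have [d d0 hd] := hc x (phi x - t) h0.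
have [M hM] := hx d d0.
have := hd _ (hM (maxn N M) (leq_maxr _ _)).
have := hn (maxn N M) (leq_maxl _ _).
move: (phi (s (maxn N M))) => z hz.
rewrite ltr_norml => /andP [_]; lra.
Qed.

Lemma ge_lim b phi s x N t : contb b phi -> convb b s x ->
  (forall n, (N <= n)%N -> t <= phi (s n)) -> t <= phi x.
Proof.
move=> hc hx hn; rewrite leNgt; apply/negP => lt.
have h0 : 0 < t - phi x by rewrite subr_gt0.
have [d d0 hd] := hc x (t - phi x) h0.
have [M hM] := hx d d0.
have := hd _ (hM (maxn N M) (leq_maxr _ _)).
have := hn (maxn N M) (leq_maxl _ _).
move: (phi (s (maxn N M))) => z hz.
rewrite ltr_norml => /andP [h _]; lra.
Qed.

Lemma gen_clopen b (phi : T -> R) (q : R) : polishb b -> contb b phi ->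
  exists b', [/\ polishb b', finer b' b & clopen b' [set x | q < phi x]].
Proof.
move=> pb hc.
pose i x := nat_of_bool (q < phi x).
pose k x := if q < phi x then (phi x - q)^-1 else 0.
exists (refb b i k); split.
- apply: refb_polish => //.
  + move=> s x j N hx hi hk.
    case hN : (q < phi (s N)).
    * have hn : forall n, (N <= n)%N -> q < phi (s n).
        move=> n Nn; have := hi n Nn; have := hi N (leqnn _).
        rewrite /i hN => <-; by case: (q < phi (s n)).
      have [N1 h1] := hk 1 ltr01.
      pose M := maxn N N1.
      pose B := 1 + `|k (s M)|.
      have B0 : 0 < B by rewrite /B ltr_pwDl.
      have hB : forall n, (M <= n)%N -> B^-1 <= phi (s n) - q.
        move=> n; rewrite geq_max => /andP [Nn N1n].
        have := h1 n M N1n (leq_maxr _ _); rewrite /= /k !hn //; last exact: leq_maxl.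
        move=> h; rewrite invf_ple ?posrE ?subr_gt0 ?hn //.
        have := ler_norm ((phi (s n) - q)^-1 - (phi (s M) - q)^-1).
        have := ler_norm ((phi (s M) - q)^-1).
        move: h; rewrite /B /k hn; last exact: leq_maxl.
        move: ((phi (s n) - q)^-1) ((phi (s M) - q)^-1) => u v.
        move: `|u - v| `|v| => w z; lra.
      have hxq : q + B^-1 <= phi x.
        apply: (ge_lim hc hx (N := M)) => n Mn; have := hB n Mn; lra.
      have qx : q < phi x by apply: lt_le_trans hxq; rewrite ltrDl invr_gt0.
      split; first by rewrite /i qx; move: (hi N (leqnn _)); rewrite /i hN.
      move=> e e0.
      have eB : 0 < e / B ^+ 2 by rewrite divr_gt0 // exprn_gt0.
      have [d d0 hd] := hc x _ eB.
      have [N3 h3] := hx d d0.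
      exists (maxn M N3) => n; rewrite geq_max => /andP [Mn N3n].
      rewrite /k qx hn; last by apply: leq_trans Mn; exact: leq_maxl.
      apply: le_lt_trans (inv_diff B0 _ (hB n Mn)) _; first lra.
      have -> : phi x - q - (phi (s n) - q) = phi x - phi (s n) by ring.
      have := hd _ (h3 n N3n).
      rewrite -(ltr_pM2l (exprn_gt0 2 B0)) mulrCA divff ?mulr1 //.
      by rewrite gt_eqF // exprn_gt0.
    * have hn : forall n, (N <= n)%N -> ~~ (q < phi (s n)).
        move=> n Nn; have := hi n Nn; have := hi N (leqnn _).
        rewrite /i hN => <-; by case: (q < phi (s n)).
      have hxq : phi x <= q.
        by apply: (le_lim hc hx (N := N)) => n /hn; rewrite -leNgt.
      have qx : ~~ (q < phi x) by rewrite -leNgt.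
      split; first by rewrite /i (negbTE qx); move: (hi N (leqnn _)); rewrite /i hN.
      move=> e e0; exists N => n Nn.
      by rewrite /k (negbTE qx) (negbTE (hn n Nn)) subrr normr0.
  + move=> x e e0.
    case qx : (q < phi x); last first.
      exists 1 => // y _; rewrite /i /k qx.
      by case: (q < phi y) => // _; rewrite subrr normr0.
    pose a := phi x - q.
    have a0 : 0 < a by rewrite subr_gt0.
    pose B := 2 / a.
    have B0 : 0 < B by rewrite divr_gt0.
    have eps0 : 0 < Num.min (a / 2) (e / B ^+ 2).
      by rewrite lt_min !divr_gt0 // exprn_gt0.
    have [d d0 hd] := hc x _ eps0.
    exists d => // y bxy; rewrite /i qx.
    case qy : (q < phi y) => // _.
    have h := hd y bxy; move: h; rewrite lt_min => /andP [h1 h2].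
    have hBi : B^-1 = a / 2 by rewrite /B invf_div.
    rewrite /k qx qy.
    apply: le_lt_trans (inv_diff B0 _ _) _.
    + by rewrite hBi /a; move: a0; rewrite /a; lra.
    + rewrite hBi /a; move: a0 h1; rewrite /a ltr_norml => a0 /andP [h1 h1']; lra.
    + have -> : phi x - q - (phi y - q) = phi x - phi y by ring.
      rewrite -(ltr_pM2l (exprn_gt0 2 B0)) in h2.
      by move: h2; rewrite mulrCA divff ?mulr1 // gt_eqF // exprn_gt0.
- exact: refb_finer.
- split; apply: refb_open => x y; rewrite /i => hxy /=.
  + by move: hxy; case: (q < phi x); case: (q < phi y).
  + by move: hxy; case: (q < phi x); case: (q < phi y).
Qed.

End gen.

Section join.
Context {R : realType} {T : Type}.
Implicit Types (b : T -> R -> T -> Prop).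

Definition joinb (bs : nat -> T -> R -> T -> Prop) : T -> R -> T -> Prop :=
  fun x e y => 0 < e /\ forall n : nat, e * n%:R < 1 -> bs n x e y.

Lemma joinb_pm bs : (forall n, ispm (bs n)) -> ispm (joinb bs).
Proof.
move=> pm; split.
- by move=> x e e0; split => // n _; exact: pm_refl.
- by move=> x y e [e0 h]; split => // n /h; exact: pm_sym.
- move=> x y z e1 e2 [e10 h1] [e20 h2]; split; first exact: addr_gt0.
  move=> n hn.
  have hn1 : e1 * n%:R < 1.
    by apply: le_lt_trans hn; rewrite mulrDl lerDl mulr_ge0 // ltW.
  have hn2 : e2 * n%:R < 1.
    by apply: le_lt_trans hn; rewrite mulrDl lerDr mulr_ge0 // ltW.
  exact (pm_tri (pm n) (h1 n hn1) (h2 n hn2)).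
Qed.

Lemma small_idx (e : R) (n : nat) : 0 < e -> Num.min e (n.+1%:R)^-1 * n%:R < 1.
Proof.
move=> e0; apply: le_lt_trans (_ : (n.+1%:R)^-1 * n%:R < 1).
  by apply: ler_wpM2r; [exact: ler0n| rewrite ge_min lexx orbT].
rewrite mulrC -(ltr_pM2r (_ : 0 < n.+1%:R)) ?ltr0Sn // mul1r -mulrA mulVf ?mulr1 ?ltr_nat //.

Qed.

Lemma joinb_finer bs n : (forall n, ispm (bs n)) -> finer (joinb bs) (bs n).
Proof.
move=> pm x e e0.
have m0 : 0 < Num.min e (n.+1%:R)^-1 by rewrite lt_min e0 invr_gt0 ltr0Sn.
exists (Num.min e (n.+1%:R)^-1) => // y [_ h].
apply: pm_le (pm n) (h n (small_idx n e0)) _; by rewrite ge_min lexx.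
Qed.

Lemma fin_max (P : nat -> nat -> Prop) K :
  (forall i, (i < K)%N -> exists N, forall n, (N <= n)%N -> P i n) ->
  exists N, forall i n, (i < K)%N -> (N <= n)%N -> P i n.
Proof.
elim: K => [|K IH] h; first by exists 0%N.
have [N1 h1] := IH (fun i iK => h i (ltnW iK)).
have [N2 h2] := h K (ltnSn _).
exists (maxn N1 N2) => i n; rewrite ltnS leq_eqVlt geq_max => /orP [/eqP ->|iK] /andP [a1 a2].
- exact: h2.
- exact: h1.
Qed.

Lemma bound_idx (e : R) : 0 < e -> exists K : nat, forall n : nat, e * n%:R < 1 -> (n < K)%N.
Proof.
move=> e0; exists (Num.bound (e^-1)) => n hn.
rewrite ltnNge; apply/negP => Kn.
have ei : 0 <= e^-1 by rewrite invr_ge0 ltW.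
have h1 := archi_boundP ei.
have : 1 < e * n%:R.
  have en : e != 0 by rewrite gt_eqF.
  rewrite -[X in X < _](mulfV en) ltr_pM2l //.
  apply: lt_le_trans h1 _; by rewrite ler_nat.
by rewrite ltNge ltW.
Qed.

Lemma joinb_polish b0 bs : ispm b0 -> hausd b0 ->
  (forall n, polishb (bs n)) -> (forall n, finer (bs n) b0) -> polishb (joinb bs).
Proof.
move=> pm0 h0 pol fin.
have pm n : ispm (bs n) by case: (pol n).
split; first exact: joinb_pm.
- move=> s hs.
  have hcn : forall n, cauchyb (bs n) s.
    move=> n e e0.
    have m0 : 0 < Num.min e (n.+1%:R)^-1 by rewrite lt_min e0 invr_gt0 ltr0Sn.
    have [N hN] := hs _ m0; exists N => i j Ni Nj.
    have [_ h] := hN i j Ni Nj.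
    apply: pm_le (pm n) (h n (small_idx n e0)) _; by rewrite ge_min lexx.
  have /choice [xs hxs] : forall n, exists x, convb (bs n) s x.
    move=> n; exact: pol_compl (pol n) _ (hcn n).
  have heq : forall n, xs n = xs 0%N.
    move=> n; apply: conv_unique pm0 h0 _ _; apply: finer_conv (fin _) (hxs _).
  exists (xs 0%N) => e e0.
  have [K hK] := bound_idx e0.
  have hh : forall i, (i < K)%N -> exists N, forall n, (N <= n)%N -> bs i (xs 0%N) e (s n).
    by move=> i _; rewrite -(heq i); exact: hxs.
  have [N hN] := fin_max hh.
  exists N => n Nn; split => // i /hK iK; exact: hN.
- have /choice [cs hcs] : forall n, exists c, denseb (bs n) c.
    move=> n; exact: pol_sep (pol n).
  pose c' (k : nat) : T := match (unpickle k : option (nat * seq nat)) with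
    | Some (m, l) =>
       match pselect (exists y, forall i, (i < size l)%N -> bs i (cs i (nth 0%N l i)) (m.+1%:R)^-1 y) with
       | left h => projT1 (cid h)
       | right _ => cs 0%N 0%N end
    | None => cs 0%N 0%N end.
  exists c' => x e e0.
  have [K hK] := bound_idx e0.
  have r0 : 0 < e / 2 by rewrite divr_gt0.
  have [m hm] := arch_inv r0.
  have m0 : 0 < (m.+1%:R)^-1 :> R by rewrite invr_gt0 ltr0Sn.
  have /choice [g hg] : forall i, exists j, bs i x (m.+1%:R)^-1 (cs i j).
    move=> i; exact: hcs i x _ m0.
  exists (pickle (m, mkseq g K)); rewrite /c' pickleK.
  case: pselect => [h|nh]; last first.
    exfalso; apply: nh; exists x => i; rewrite size_mkseq => iK.
    rewrite nth_mkseq //; exact: pm_sym (hg i).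
  case: (cid h) => y /= hy; split => // i /hK iK.
  have := hy i; rewrite size_mkseq nth_mkseq // => /(_ iK) h2.
  apply: pm_le (pm i) (pm_tri (pm i) (hg i) h2) _.
  rewrite [X in _ <= X]splitr; apply: lerD; exact: ltW.
Qed.

End join.

Section sig.
Context {T : Type}.
Implicit Types (S : set (set T)).

Lemma sig_C S A : sigma_algebra setT S -> S A -> S (~` A).
Proof. by move=> [_ hC _] /hC; rewrite setTD. Qed.

Lemma sig_U S A B : sigma_algebra setT S -> S A -> S B -> S (A `|` B).
Proof.
move=> [_ _ hU] hA hB.
have -> : A `|` B = \bigcup_n (if n is 0 then A else B).
  apply/seteqP; split => x.
  - by case => h; [exists 0%N | exists 1%N].
  - by case => [[|n]] _ h; [left|right].
by apply: hU => -[|n].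
Qed.

Lemma sig_I S A B : sigma_algebra setT S -> S A -> S B -> S (A `&` B).
Proof.
move=> hS hA hB; rewrite -[A `&` B]setCK setCI; apply: sig_C => //.
by apply: sig_U => //; apply: sig_C.
Qed.

Lemma sig_bigcap S (A : nat -> set T) : sigma_algebra setT S -> (forall n, S (A n)) ->
  S (\bigcap_n A n).
Proof.
move=> hS hA; rewrite -[X in S X]setCK setC_bigcap; apply: sig_C => //.
have [_ _ hU] := hS; apply: hU => n; exact: sig_C.
Qed.

End sig.

Section Lclass.
Context {R : realType} {T : Type} (b0 : T -> R -> T -> Prop).
Hypotheses (pb0 : polishb b0) (h0 : hausd b0).

Definition Lc (S : set T) := exists b, [/\ polishb b, finer b b0 & clopen b S].

Lemma Lc_join (Bs : nat -> set T) : (forall n, Lc (Bs n)) ->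
  exists b, [/\ polishb b, finer b b0 & forall n, clopen b (Bs n)].
Proof.
move=> /choice [bs hbs].
have pm0 : ispm b0 by case: pb0.
have pmn n : ispm (bs n) by have [[]] := hbs n.
exists (joinb bs); split.
- apply: joinb_polish pm0 h0 _ _ => n; by have [] := hbs n.
- apply: finer_trans (joinb_finer 0 pmn) _; by have [] := hbs 0%N.
- move=> n; apply: finer_clopen (joinb_finer n pmn) _; by have [] := hbs n.
Qed.

Definition cellspec (Bs : nat -> set T) x (j : nat) : Prop :=
  match j with 0 => forall n, ~ Bs n x
  | j'.+1 => Bs j' x /\ forall m, (m < j')%N -> ~ Bs m x end.

Lemma cell_ex Bs x : exists j, cellspec Bs x j.
Proof.
case: (pselect (exists n, Bs n x)) => [[n hn]|nh]; last first.
  by exists 0%N => n hn; apply: nh; exists n.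
have hex : exists n, `[< Bs n x >] by exists n; apply/asboolP.
case: (ex_minnP hex) => m /asboolP Hm Hmin; exists m.+1; split => // k km Bk.
by have := Hmin k (asboolT Bk); rewrite leqNgt km.
Qed.

Lemma cell_uniq Bs x j j' : cellspec Bs x j -> cellspec Bs x j' -> j = j'.
Proof.
case: j => [|j]; case: j' => [|j'] //=.
- by move=> h [hj _]; case: (h j').
- by move=> [hj _] h; case: (h j).
- move=> [h1 h2] [h1' h2']; congr S.
  case: (ltngtP j j') => // jj.
  + by case: (h2' _ jj).
  + by case: (h2 _ jj).
Qed.

Lemma cell_lim (b : T -> R -> T -> Prop) Bs s x j N : (forall n, clopen b (Bs n)) -> convb b s x ->
  (forall n, (N <= n)%N -> cellspec Bs (s n) j) -> cellspec Bs x j.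
Proof.
move=> hc hx hn; case: j hn => [|j] hn /=.
- move=> n; apply: (lim_not (hc n).1 hx (N := N)) => m /hn; exact.
- split.
  + apply: (lim_in (hc j).2 hx (N := N)) => m /hn; by case.
  + move=> m mj; apply: (lim_not (hc m).1 hx (N := N)) => k /hn [_]; exact.
Qed.

Lemma Lc_sigma : sigma_algebra setT Lc.
Proof.
split.
- exists b0; split => //; first exact: finer_refl.
  split; first by move=> x.
  by move=> x _; exists 1 => // y _ [].
- move=> A [b [pb fb [c1 c2]]]; exists b; split => //.
  by rewrite setTD; split => //; rewrite setCK.
- move=> Bs hBs; have [b [pb fb hc]] := Lc_join hBs.
  have /choice [i hi] := cell_ex Bs.
  have pm : ispm b by case: pb.
  exists (refb b i (fun _ => 0)); split.
  + apply: refb_polish => //.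
    * move=> s x j N hx hn _; split; last by move=> e e0; exists 0%N => n _; rewrite subrr normr0.
      apply: cell_uniq (hi x) _; apply: (cell_lim (N := N) hc hx).
      by move=> n /hn <-.
    * by move=> x e e0; exists 1 => // y _ _; rewrite subrr normr0.
  + exact: finer_trans (refb_finer _ _ _) fb.
  + have key : forall x, (\bigcup_n Bs n) x <-> i x != 0%N.
      move=> x; split.
      * move=> [n _ Bn]; apply/eqP => h; have := hi x; rewrite h; by move/(_ n).
      * move: (hi x); case: (i x) => [//|j] [Bj _] _; by exists j.
    split; apply: refb_open => x y hxy /=.
    * by rewrite !key hxy.
    * by rewrite !key hxy.
Qed.

Lemma Lc_gen (phi : T -> R) q : contb b0 phi -> Lc [set x | q < phi x].
Proof.
move=> hc; have [b [pb fb cb]] := gen_clopen q pb0 hc; by exists b.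
Qed.

End Lclass.

Section septh.
Context {R : realType} {T : Type} (b : T -> R -> T -> Prop).
Hypothesis pb : polishb b.

Let pm : ispm b. Proof. by case: pb. Qed.

Definition rk (k : nat) : R := (k.+1%:R)^-1.
Lemma rk_gt0 k : 0 < rk k. Proof. by rewrite invr_gt0 ltr0Sn. Qed.
Definition bll (z : T) (r : R) : set T := [set y | b z r y].

Lemma side_lim (A : nat -> set T) (a : nat -> T) :
  (forall k m, (k <= m)%N -> A m `<=` A k) ->
  (forall k, exists z, A k.+1 `<=` bll z (rk k)) ->
  (forall k, A k (a k)) -> exists p, convb b a p.
Proof.
move=> hmono hdiam ha; apply: (pol_compl pb) => e e0.
have e20 : 0 < e / 2 by rewrite divr_gt0.
have [m hm] := arch_inv e20.
have [z hz] := hdiam m.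
exists m.+1 => n n' hn hn'.
have h1 := hz _ (hmono _ _ hn _ (ha n)).
have h2 := hz _ (hmono _ _ hn' _ (ha n')).
apply: pm_le pm (pm_tri pm (pm_sym pm h1) h2) _.
rewrite [X in _ <= X]splitr; apply: lerD; exact: ltW.
Qed.

Lemma side_in (A : nat -> set T) (a : nat -> T) p (V : set T) :
  (forall k m, (k <= m)%N -> A m `<=` A k) ->
  (forall k, exists z, A k.+1 `<=` bll z (rk k)) ->
  (forall k, A k (a k)) -> convb b a p -> bopen b V -> V p ->
  exists m, A m `<=` V.
Proof.
move=> hmono hdiam ha hp hV Vp.
have [e e0 he] := hV p Vp.
have e30 : 0 < e / 3 by rewrite divr_gt0.
have [m hm] := arch_inv e30.
have [z hz] := hdiam m.
exists m.+1 => y Ay.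
have [N hN] := hp _ (rk_gt0 m).
pose n := maxn N m.+1.
have hn : b p (rk m) (a n) by apply: hN; exact: leq_maxl.
have An : A m.+1 (a n) by apply: hmono (ha n); exact: leq_maxr.
have h1 := hz _ Ay; have h2 := hz _ An.
apply: he; apply: pm_le pm (pm_tri pm hn (pm_tri pm (pm_sym pm h2) h1)) _.
have : rk m <= e / 3 by apply: ltW.
move: (rk m) => r; lra.
Qed.

Variable S : set (set T).
Hypothesis hS : sigma_algebra setT S.

Definition sep (A1 A2 : set T) := exists W, [/\ S W, A1 `<=` W & forall x, A2 x -> ~ W x].

Lemma sep_mono A1 A2 B1 B2 : A1 `<=` B1 -> A2 `<=` B2 -> sep B1 B2 -> sep A1 A2.
Proof.
move=> h1 h2 [W [SW hW hW']]; exists W; split => //.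
- by move=> x /h1 /hW.
- by move=> x /h2 /hW'.
Qed.

Lemma nsep_ne1 A1 A2 : ~ sep A1 A2 -> exists x, A1 x.
Proof.
move=> h; apply: contrapT => nh; apply: h; exists set0; split.
- by case: hS.
- by move=> x A1x; apply: nh; exists x.
- by move=> x _ [].
Qed.

Lemma nsep_ne2 A1 A2 : ~ sep A1 A2 -> exists x, A2 x.
Proof.
move=> h; apply: contrapT => nh; apply: h; exists setT; split.
- rewrite -setC0; apply: sig_C => //; by case: hS.
- by move=> x.
- by move=> x A2x; exfalso; apply: nh; exists x.
Qed.

Lemma sep_cup (A B : nat -> set T) : (forall i j, sep (A i) (B j)) ->
  sep (\bigcup_i A i) (\bigcup_j B j).
Proof.
move=> h.
have /choice [W hW] : forall ij : nat * nat, exists W,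
    [/\ S W, A ij.1 `<=` W & forall x, B ij.2 x -> ~ W x].
  by move=> [i j]; exact: h.
exists (\bigcup_i \bigcap_j W (i, j)); split.
- case: hS => _ _ hU; apply: hU => i; apply: sig_bigcap => // j.
  by case: (hW (i, j)).
- move=> x [i _ Ax]; exists i => // j _; by case: (hW (i, j)) => _ /(_ x Ax).
- move=> x [j _ Bx] [i _ /(_ j I)]; by case: (hW (i, j)) => _ _ /(_ x Bx).
Qed.

Variable c : nat -> T.
Hypothesis hc : denseb b c.

Lemma split_nsep A1 A2 r : 0 < r -> ~ sep A1 A2 ->
  exists ij : nat * nat, ~ sep (A1 `&` bll (c ij.1) r) (A2 `&` bll (c ij.2) r).
Proof.
move=> r0 hn; apply: contrapT => nh; apply: hn.
apply: (sep_mono (B1 := \bigcup_i (A1 `&` bll (c i) r)) (B2 := \bigcup_j (A2 `&` bll (c j) r))).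
- move=> x Ax; have [i hi] := hc x r0; exists i => //; split => //; exact: pm_sym.
- move=> x Ax; have [i hi] := hc x r0; exists i => //; split => //; exact: pm_sym.
- apply: sep_cup => i j; apply: contrapT => nij; apply: nh; by exists (i, j).
Qed.

Definition step (k : nat) (p : set T * set T) : set T * set T :=
  match pselect (exists ij : nat * nat,
     ~ sep (p.1 `&` bll (c ij.1) (rk k)) (p.2 `&` bll (c ij.2) (rk k))) with
  | left h => let ij := projT1 (cid h) in
      (p.1 `&` bll (c ij.1) (rk k), p.2 `&` bll (c ij.2) (rk k))
  | right _ => p end.

Lemma step_spec k p : ~ sep p.1 p.2 ->
  [/\ ~ sep (step k p).1 (step k p).2, (step k p).1 `<=` p.1, (step k p).2 `<=` p.2,
      exists z, (step k p).1 `<=` bll z (rk k) & exists z, (step k p).2 `<=` bll z (rk k)].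
Proof.
move=> hn; rewrite /step; case: pselect => [h|nh]; last first.
  by exfalso; apply: nh; apply: split_nsep => //; exact: rk_gt0.
case: (cid h) => -[i j] /= hij; split.
- exact: hij.
- by move=> x [].
- by move=> x [].
- by exists (c i) => x [].
- by exists (c j) => x [].
Qed.

Variables (Qs : nat -> set T) (Q : set T).
Hypotheses (hQs : forall n, clopen b (Qs n)) (SQs : forall n, S (Qs n)) (hQ : clopen b Q)
  (hsat : forall x y, Q x -> (forall n, Qs n x <-> Qs n y) -> Q y).

Fixpoint Sq (k : nat) : set T * set T :=
  match k with 0 => (Q, ~` Q) | k'.+1 => step k' (Sq k') end.

Theorem separation : S Q.
Proof.
apply: contrapT => nSQ.
have n0 : ~ sep Q (~` Q).
  move=> [W [SW QW hW]]; apply: nSQ.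
  have -> : Q = W; last by [].
  apply/seteqP; split => // x Wx; apply: contrapT => nQ; exact: (hW x nQ Wx).
have hns : forall k, ~ sep (Sq k).1 (Sq k).2.
  elim => [//|k IH] /=; by have [] := step_spec k IH.
have hmono1 : forall k m, (k <= m)%N -> (Sq m).1 `<=` (Sq k).1.
  move=> k m; elim: m => [|m IH]; first by rewrite leqn0 => /eqP ->.
  rewrite leq_eqVlt => /orP [/eqP -> //|]; rewrite ltnS => /IH h x /=.
  by have [_ h1 _ _ _] := step_spec m (hns m); move/h1/h.
have hmono2 : forall k m, (k <= m)%N -> (Sq m).2 `<=` (Sq k).2.
  move=> k m; elim: m => [|m IH]; first by rewrite leqn0 => /eqP ->.
  rewrite leq_eqVlt => /orP [/eqP -> //|]; rewrite ltnS => /IH h x /=.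
  by have [_ _ h2 _ _] := step_spec m (hns m); move/h2/h.
have hd1 : forall k, exists z, (Sq k.+1).1 `<=` bll z (rk k).
  by move=> k; have [] := step_spec k (hns k).
have hd2 : forall k, exists z, (Sq k.+1).2 `<=` bll z (rk k).
  by move=> k; have [] := step_spec k (hns k).
have /choice [a1 ha1] : forall k, exists x, (Sq k).1 x.
  move=> k; exact: nsep_ne1 (hns k).
have /choice [a2 ha2] : forall k, exists x, (Sq k).2 x.
  move=> k; exact: nsep_ne2 (hns k).
have [p1 hp1] := side_lim hmono1 hd1 ha1.
have [p2 hp2] := side_lim hmono2 hd2 ha2.
have Qp1 : Q p1.
  apply: (lim_in hQ.2 hp1 (N := 0%N)) => n _; exact: (hmono1 0%N n isT _ (ha1 n)).
have nQp2 : ~ Q p2.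
  apply: (lim_in (S := ~` Q) _ hp2 (N := 0%N)) => [|n _]; first by rewrite setCK; exact: hQ.1.
  exact: (hmono2 0%N n isT _ (ha2 n)).
have [n hn] : exists n, ~ (Qs n p1 <-> Qs n p2).
  apply: contrapT => nh; apply: nQp2; eapply hsat; [exact Qp1|] => n.
  by apply: contrapT => h; apply: nh; exists n.
have fin : forall V, S V -> bopen b V -> bopen b (~` V) -> V p1 -> ~ V p2 -> False.
  move=> V SV oV oV' Vp1 nVp2.
  have [m1 hm1] := side_in hmono1 hd1 ha1 hp1 oV Vp1.
  have [m2 hm2] := side_in hmono2 hd2 ha2 hp2 oV' nVp2.
  apply: (hns (maxn m1 m2)); exists V; split => //.
  - by move=> x /(hmono1 _ _ (leq_maxl m1 m2)) /hm1.
  - by move=> x /(hmono2 _ _ (leq_maxr m1 m2)) /hm2.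
case: (pselect (Qs n p1)) => h1.
- apply: (fin (Qs n)) => //; [exact: (hQs n).1|exact: (hQs n).2|].
  by move=> h2; apply: hn.
- apply: (fin (~` Qs n)) => //.
  + exact: sig_C.
  + exact: (hQs n).2.
  + by rewrite setCK; exact: (hQs n).1.
  + move=> /= h2; apply: hn; split => h3; by [case: h1|case: h2].
Qed.

End septh.

Section mc.

Context {R : realType} (P : completePseudoMetricType R).

Lemma mc_complete (s : nat -> P) :
  (forall e : R, 0 < e -> exists N, forall n m, (N <= n)%N -> (N <= m)%N -> ball (s n) e (s m)) ->
  exists x, forall e : R, 0 < e -> exists N, forall n, (N <= n)%N -> ball x e (s n).
Proof.
move=> hc.
have : cauchy (s @ \oo).
  apply: cauchy_exP => e e0.
  have [N hN] := hc e e0.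
  exists (s N); exists N => // n /= Nn; exact: hN.
move=> /cauchy_cvg hcv.
exists (lim (s @ \oo)) => e e0.
have := cvg_ball hcv e0.
move=> [N _ HN]; exists N => n Nn; exact: HN.
Qed.




Lemma mc_hausd (x y : P) : hausdorff_space P ->
  (forall e : R, 0 < e -> ball x e y) -> x = y.
Proof.
rewrite ball_hausdorff => hh hb.
apply/eqP; apply: contraT => /hh [[r1 r2]] /= /eqP.
rewrite -subset0 => H.
suff : (set0 : set P) y by []. apply: H; split; last exact: ballxx.
exact: hb.
Qed.

Lemma mc_cont (f : P -> R) : continuous f ->
  forall x (e : R), 0 < e -> exists2 d : R, 0 < d & forall y, ball x d y -> `|f x - f y| < e.
Proof.
move=> cf x e e0.
have := @cvg_ball _ _ _ _ _ f (f x) (cf x) _ e0.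
move=> H. have [d /= d0 hd] := (iffLR (nbhs_ballP _ _) (H _)). exists d => // y /hd /=.
Qed.

Lemma mc_dense (D : set P) : closure D = setT -> forall x (e : R), 0 < e -> exists2 y, D y & ball x e y.
Proof.
move=> hD x e e0.
have : closure D x by rewrite hD.
move=> /(_ _ (nbhsx_ballx x e e0)) [y [Dy bxy]]; by exists y.
Qed.
End mc.


Lemma enum_countable (T : Type) (A : set T) (x0 : T) : countable A -> A x0 ->
  exists c : nat -> T, (forall n, A (c n)) /\ forall x, A x -> exists n, c n = x.
Proof.
move=> /countable_injP [f finj] Ax0.
pose c (n : nat) : T := match pselect (exists x, A x /\ f x = n) with
  | left h => projT1 (cid h) | right _ => x0 end.
exists c; split.
- move=> n; rewrite /c; case: pselect => [h|//]; by case: (cid h) => x /= [].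
- move=> x Ax; exists (f x); rewrite /c; case: pselect => [h|[]]; last by exists x.
  case: (cid h) => y /= [Ay fy]; apply: finj => //; by rewrite inE.
Qed.

Section prodb.
Context {R : realType} (P1 P2 : completePseudoMetricType R).

Definition b0 (x : P1 * P2) (e : R) (y : P1 * P2) := ball x.1 e y.1 /\ ball x.2 e y.2.

Lemma b0_pm : ispm b0.
Proof.
split.
- by move=> x e e0; split; apply: ballxx.
- by move=> x y e [h1 h2]; split; apply: ball_sym.
- move=> x y z e1 e2 [h1 h2] [g1 g2]; split; [exact: (ball_triangle h1 g1)|exact: (ball_triangle h2 g2)].
Qed.

Lemma b0_hausd : hausdorff_space P1 -> hausdorff_space P2 -> hausd b0.
Proof.
move=> hh1 hh2 [x1 x2] [y1 y2] h.
have e1 : x1 = y1 by apply: mc_hausd hh1 _ => e /h [].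
have e2 : x2 = y2 by apply: mc_hausd hh2 _ => e /h [].
by rewrite e1 e2.
Qed.

Lemma b0_polish (p1 : P1) (p2 : P2) : polish P1 -> polish P2 -> polishb b0.
Proof.
move=> [_ [D1 [cD1 hD1]]] [_ [D2 [cD2 hD2]]].
split; first exact: b0_pm.
- move=> s hs.
  have [x1 h1] := @mc_complete R P1 (fun n => (s n).1) (fun e e0 =>
     let: ex_intro N hN := hs e e0 in ex_intro _ N (fun n m a b => (hN n m a b).1)).
  have [x2 h2] := @mc_complete R P2 (fun n => (s n).2) (fun e e0 =>
     let: ex_intro N hN := hs e e0 in ex_intro _ N (fun n m a b => (hN n m a b).2)).
  exists (x1, x2) => e e0.
  have [N1 hN1] := h1 e e0; have [N2 hN2] := h2 e e0.
  exists (maxn N1 N2) => n; rewrite geq_max => /andP [a1 a2]; split; [exact: hN1|exact: hN2].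
- have [d1 Dd1 _] := mc_dense hD1 p1 ltr01.
  have [d2 Dd2 _] := mc_dense hD2 p2 ltr01.
  have [c1 [_ hc1]] := enum_countable cD1 Dd1.
  have [c2 [_ hc2]] := enum_countable cD2 Dd2.
  exists (fun n => match (unpickle n : option (nat * nat)) with
    | Some (i, j) => (c1 i, c2 j) | None => (p1, p2) end).
  move=> [x1 x2] e e0.
  have [y1 Dy1 hy1] := mc_dense hD1 x1 e0.
  have [y2 Dy2 hy2] := mc_dense hD2 x2 e0.
  have [i hi] := hc1 _ Dy1; have [j hj] := hc2 _ Dy2.
  exists (pickle (i, j)); rewrite pickleK /= hi hj; by split.
Qed.

Lemma b0_cont1 (f : P1 -> R) : continuous f -> contb b0 (fun p => f p.1).
Proof.
move=> cf x e e0; have [d d0 hd] := mc_cont cf x.1 e0.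
by exists d => // y [h _]; exact: hd.
Qed.

Lemma b0_cont2 (f : P2 -> R) : continuous f -> contb b0 (fun p => f p.2).
Proof.
move=> cf x e e0; have [d d0 hd] := mc_cont cf x.2 e0.
by exists d => // y [_ h]; exact: hd.
Qed.

End prodb.

Lemma blackwell_abs {R : realType} {T Z : Type} (b : T -> R -> T -> Prop)
  (pb : polishb b) (hb : hausd b) (h : T -> Z) (hsurj : forall z, exists p, h p = z)
  (D : nat -> set Z) (hsepD : forall z z', z <> z' -> exists n, ~ (D n z <-> D n z'))
  (E : set Z) (LD : forall n, Lc b (h @^-1` D n)) (LE : Lc b (h @^-1` E)) :
  <<s range D >> E.
Proof.
pose Fm (n : nat) := if n is n'.+1 then h @^-1` D n' else h @^-1` E.
have LF : forall n, Lc b (Fm n) by case.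
have [b' [pb' _ hc]] := Lc_join pb hb LF.
pose ST := [set A | exists2 W, <<s range D >> W & A = h @^-1` W].
have sST : sigma_algebra setT ST.
  have sD := @smallest_sigma_algebra Z setT (range D).
  split.
  - by exists set0; [case: sD|].
  - move=> A [W SW ->]; exists (~` W); first exact: (sig_C sD SW).
    by rewrite setTD.
  - move=> As hAs.
    have /choice [Ws hWs] : forall n, exists W, <<s range D >> W /\ As n = h @^-1` W.
      by move=> n; case: (hAs n) => W W1 W2; exists W.
    exists (\bigcup_n Ws n).
      by case: sD => _ _; apply => n; case: (hWs n).
    rewrite preimage_bigcup; apply: eq_bigcupr => n _; by case: (hWs n).
have [c hcd] := pol_sep pb'.
have SQs : forall n, ST (Fm n.+1).
  by move=> n; exists (D n) => //; apply: sub_sigma_algebra; exists n.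
have hsat : forall x y, Fm 0%N x -> (forall n, Fm n.+1 x <-> Fm n.+1 y) -> Fm 0%N y.
  move=> x y Ex hxy /=; have -> : h y = h x; last exact: Ex.
  apply: contrapT => ne; have [n hn] := hsepD _ _ ne.
  apply: hn; split => hh; by apply/(hxy n).
have [W SW hW] := @separation R T b' pb' ST sST c hcd (fun n => Fm n.+1) (Fm 0%N)
   (fun n => hc n.+1) SQs (hc 0%N) hsat.
have -> : E = W; last exact: SW.
apply/seteqP; split => z; have [p <-] := hsurj z.
+ by move=> Ez; have : Fm 0%N p by []; rewrite hW.
+ by move=> Wz; have : (h @^-1` W) p by []; rewrite -hW.
Qed.


Lemma meas_gen {R : realType} (B : set R) : measurable B -> <<s (@RGenOInfty.G R) >> B.
Proof. have := @RGenOInfty.measurableE R. move=> E mB.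
have H : (@ocitv R).-sigma.-measurable B by exact: mB.
exact: (eq_ind _ (fun S : set (set R) => S B) H _ E). Qed.

Lemma sig_pre {T Z : Type} (S : set (set T)) (h : T -> Z) :
  sigma_algebra setT S -> sigma_algebra setT [set W | S (h @^-1` W)].
Proof.
move=> [h0 hC hU]; split.
- by rewrite /= preimage_set0.
- move=> W /= /hC; by rewrite !setTD preimage_setC.
- move=> Ws /= hWs; rewrite preimage_bigcup; exact: hU.
Qed.

Lemma sig_inter {T : Type} (S1 S2 : set (set T)) :
  sigma_algebra setT S1 -> sigma_algebra setT S2 -> sigma_algebra setT (S1 `&` S2).
Proof.
move=> [a1 b1 c1] [a2 b2 c2]; split.
- by split.
- by move=> W [/b1 ? /b2 ?]; split.
- by move=> Ws hWs; split; [apply: c1 => n; case: (hWs n)|apply: c2 => n; case: (hWs n)].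
Qed.

Lemma Lc_pre {R : realType} {T : Type} (b : T -> R -> T -> Prop) (pb : polishb b) (hb : hausd b)
  (phi : T -> R) : contb b phi -> forall B, measurable B -> Lc b (phi @^-1` B).
Proof.
move=> hc B /meas_gen; apply: (smallest_sub (sig_pre phi (Lc_sigma pb hb))).
move=> _ [q ->] /=.
have -> : phi @^-1` `]q, +oo[%classic = [set x | q < phi x].
  by apply/seteqP; split => x /=; rewrite in_itv /= andbT.
exact: Lc_gen.
Qed.

Lemma sec1 {X U : Type} (A : set (set X)) (F : set (set U)) (hA : sigma_algebra setT A) (u0 : U) E :
  prod_sigma A F E -> A [set x | E (x, u0)].
Proof.
move=> hE; suff : prod_sigma A F `<=` [set E | A [set x | E (x, u0)]] by exact.
apply: smallest_sub.
- case: hA => a b c; split.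
  + rewrite /=; have -> : [set x | (@set0 (X * U)) (x, u0)] = set0 by apply/seteqP; split => x [].
    exact: a.
  + by move=> W /b.
  + by move=> Ws hWs; apply: (c (fun n => [set x | Ws n (x, u0)])).
- move=> _ [A1 hA1 [F1 hF1 <-]] /=.
  case: (pselect (F1 u0)) => h.
  + have -> : [set x | (A1 `*` F1) (x, u0)] = A1 by apply/seteqP; split => x /=; [case|].
    exact: hA1.
  + have -> : [set x | (A1 `*` F1) (x, u0)] = set0 by apply/seteqP; split => x /= [].
    by case: hA.
Qed.

Lemma sec2 {X U : Type} (A : set (set X)) (F : set (set U)) (hF : sigma_algebra setT F) (x0 : X) E :
  prod_sigma A F E -> F [set u | E (x0, u)].
Proof.
move=> hE; suff : prod_sigma A F `<=` [set E | F [set u | E (x0, u)]] by exact.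
apply: smallest_sub.
- case: hF => a b c; split.
  + rewrite /=; have -> : [set u | (@set0 (X * U)) (x0, u)] = set0 by apply/seteqP; split => x [].
    exact: a.
  + by move=> W /b.
  + by move=> Ws hWs; apply: (c (fun n => [set u | Ws n (x0, u)])).
- move=> _ [A1 hA1 [F1 hF1 <-]] /=.
  case: (pselect (A1 x0)) => h.
  + have -> : [set u | (A1 `*` F1) (x0, u)] = F1 by apply/seteqP; split => x /=; [case|].
    exact: hF1.
  + have -> : [set u | (A1 `*` F1) (x0, u)] = set0 by apply/seteqP; split => x /= [].
    by case: hF.
Qed.

Theorem theorem3p6 (R : realType) (X U : Type)
  (M : set (set X)) (UU : set (set U))
  (A : set (set X)) (F G : set (set U))
  (hM : analytic_space R M) (hU : analytic_space R UU)
  (hA : is_sigma_algebra A) (hAM : A `<=` M)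
  (hF : is_sigma_algebra F) (hFU : F `<=` UU)
  (hG : is_sigma_algebra G) (hGU : G `<=` UU)
  (hAcg : countably_generated A) (hFGcg : countably_generated (F `&` G))
  (hPcg : countably_generated (prod_sigma A F `&` prod_sigma A G))
  (hPcs : countably_separated (prod_sigma A F `&` prod_sigma A G)) :
  prod_sigma A F `&` prod_sigma A G = prod_sigma A (F `&` G).
Proof.
have sAF := @smallest_sigma_algebra (X * U)%type setT [set A1 `*` F1 | A1 in A & F1 in F].
have sAG := @smallest_sigma_algebra (X * U)%type setT [set A1 `*` F1 | A1 in A & F1 in G].
have sH := sig_inter sAF sAG.
apply/seteqP; split; last first.
  apply: smallest_sub => // _ [A1 hA1 [F1 [hF1 hG1] <-]]; split; apply: sub_sigma_algebra.
  - by exists A1 => //; exists F1.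
  - by exists A1 => //; exists F1.
move=> E HE.
case: (pselect (exists xu : X * U, True)) => [[[x0 u0] _]|ne]; last first.
  have -> : E = set0 by apply/seteqP; split => xu // _; apply: ne; exists xu.
  exact: sigma_algebra0.
case: hM => [[S1 [f [[_ [P1 [f1 [pol1 cf1 rf1]]]] finj rf hMi]]] _ _].
case: hU => [[S2 [g [[_ [P2 [f2 [pol2 cf2 rf2]]]] ginj rg hUi]]] _ _].
have /choice [hx hhx] : forall p : P1, exists x, f x = f1 p.
  move=> p; have : range f1 (f1 p) by exists p.
  by rewrite rf1 -rf => -[x _ fx]; exists x.
have /choice [hu hhu] : forall p : P2, exists u, g u = f2 p.
  move=> p; have : range f2 (f2 p) by exists p.
  by rewrite rf2 -rg => -[x _ fx]; exists x.
have sx : forall x, exists p, hx p = x.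
  move=> x; have : range f (f x) by exists x.
  rewrite rf -rf1 => -[p _ fp]; exists p; apply: finj; by rewrite hhx.
have su : forall u, exists p, hu p = u.
  move=> u; have : range g (g u) by exists u.
  rewrite rg -rf2 => -[p _ fp]; exists p; apply: ginj; by rewrite hhu.
pose h (p : P1 * P2) : X * U := (hx p.1, hu p.2).
have hsurj : forall z, exists p, h p = z.
  move=> [x u]; have [p1 <-] := sx x; have [p2 <-] := su u; by exists (p1, p2).
have [p1 _] := sx x0; have [p2 _] := su u0.
have pb := b0_polish p1 p2 pol1 pol2.
have hb := b0_hausd pol1.1 pol2.1.
have key : forall W, prod_sigma M UU W -> Lc (@b0 R P1 P2) (h @^-1` W).
  move=> W; apply: (smallest_sub (sig_pre h (Lc_sigma pb hb))).
  move=> _ [m hm [u hu' <-]] /=.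
  have [B1 mB1 em] := (hMi m).1 hm.
  have [B2 mB2 eu] := (hUi u).1 hu'.
  have -> : h @^-1` (m `*` u) = (fun p : P1 * P2 => f1 p.1) @^-1` B1 `&` (fun p : P1 * P2 => f2 p.2) @^-1` B2.
    apply/seteqP; split => p /=; rewrite em eu /= hhx hhu //.
  apply: sig_I (Lc_sigma pb hb) _ _.
  - exact: Lc_pre pb hb _ (b0_cont1 cf1) _ mB1.
  - exact: Lc_pre pb hb _ (b0_cont2 cf2) _ mB2.
have mono : forall (A' : set (set X)) (F' : set (set U)), A' `<=` M -> F' `<=` UU ->
    prod_sigma A' F' `<=` prod_sigma M UU.
  move=> A' F' h1 h2; apply: sub_sigma_algebra2 => _ [a1 ha1 [a2 ha2 <-]].
  exists a1; [exact: h1|exists a2; [exact: h2|by []]].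
have [c [cH csep]] : exists c : nat -> set (X * U)%type, (forall n, (prod_sigma A F `&` prod_sigma A G) (c n)) /\ forall z z', z <> z' -> exists n, ~ (c n z <-> c n z').
  case: hPcs => Gs [cGs GsH hsep].
  case: (pselect (exists W, Gs W)) => [[W0 GW0]|nG].
  - have [c [cG hc]] := enum_countable cGs GW0.
    exists c; split; first by move=> n; apply: GsH.
    move=> z z' /hsep [Mm GM hM]; have [n hn] := hc _ GM; exists n; rewrite hn.
    by case: hM => [[a1 a2]|[a1 a2]] [i1 i2]; [apply: a2; apply: i1|apply: a2; apply: i2].
  - exists (fun _ => set0); split; first by move=> n; case: sH.
    by move=> z z' /hsep [Mm GM _]; exfalso; apply: nG; exists Mm.
have BW : forall W, prod_sigma M UU W -> <<s range c >> W.
  move=> W hW; apply: (blackwell_abs pb hb hsurj csep).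
  - move=> n; apply: key; apply: (mono A F hAM hFU); exact: (cH n).1.
  - exact: key.
have MH : prod_sigma M UU `<=` prod_sigma A F `&` prod_sigma A G.
  move=> W /BW; apply: (smallest_sub sH) => _ [n _ <-]; exact: cH.
have UUT : UU setT.
  by apply/(hUi setT).2; exists setT => //; exact: measurableT.
have MT : M setT.
  by apply/(hMi setT).2; exists setT => //; exact: measurableT.
have EM : prod_sigma M UU E by apply: (mono A F hAM hFU); exact: HE.1.
move: E EM {HE}; apply: (smallest_sub (@smallest_sigma_algebra (X * U)%type setT _)).
move=> _ [m hm [u hu' <-]]; apply: sub_sigma_algebra.
have Hm : (prod_sigma A F `&` prod_sigma A G) (m `*` setT).
  by apply: MH; apply: sub_sigma_algebra; exists m => //; exists setT.
have Hu : (prod_sigma A F `&` prod_sigma A G) (setT `*` u).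
  by apply: MH; apply: sub_sigma_algebra; exists setT => //; exists u.
have e1 : [set x | (m `*` setT) (x, u0)] = m.
  by apply/seteqP; split => x /=; [case|].
have e2 : [set y | (setT `*` u) (x0, y)] = u.
  by apply/seteqP; split => x /=; [case|].
exists m; first by rewrite -e1; exact: (sec1 hA u0 Hm.1).
exists u; last by [].
split; rewrite -e2.
- exact: (sec2 hF x0 Hu.1).
- exact: (sec2 hG x0 Hu.2).
Qed.
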